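(* Let $q\in\mathbb{C}^\times$ with $q\neq\pm1$, let $\mathbb{C}[x_1,\dots,x_n]$ be the polynomial algebra (the algebra of polynomial functions on an $n$-dimensional complex vector space with linear coordinates $x_1,\dots,x_n$), and fix $i\in\{1,\dots,n\}$. If $D$ is a twisted derivation of $\mathbb{C}[x_1,\dots,x_n]$ relative to $\gamma_{q,x_i}$, then there is a polynomial $f_i\in\mathbb{C}[x_1,\dots,x_n]$ such that $D=f_i\,\partial_{q,x_i}$ (i.e. $D(a)=f_i\cdot\partial_{q,x_i}(a)$ for all $a$).
   Context: For an associative $\mathbb{C}$-algebra $A$ and an algebra automorphism $\sigma$ of $A$, a twisted derivation of $A$ relative to $\sigma$ is a linear map $D\colon A\to A$ with $D(ab)=D(a)\sigma(b)+\sigma^{-1}(a)D(b)$ for all $a,b\in A$. Here $\gamma_{q,x_i}=q^{x_i\partial_{x_i}}$ is the algebra automorphism of $\mathbb{C}[x_1,\dots,x_n]$ with $x_i\mapsto qx_i$ and $x_j\mapsto x_j$ for $j\neq i$, and $\partial_{q,x_i}=\frac{1}{x_i}\,\frac{q^{x_i\partial_{x_i}}-q^{-x_i\partial_{x_i}}}{q-q^{-1}}$, i.e. the linear map sending a monomial $x_1^{a_1}\cdots x_n^{a_n}$ to $[a_i]_q\,x_1^{a_1}\cdots x_i^{a_i-1}\cdots x_n^{a_n}$, where $[v]_q=\frac{q^v-q^{-v}}{q-q^{-1}}$. It is a twisted derivation relative to $\gamma_{q,x_i}$. *)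

(* Defs.v *)
From Stdlib Require Import Reals.
From mathcomp Require Import all_boot all_algebra.
From mathcomp Require Import Rstruct.
From mathcomp.real_closed Require Import complex.
From mathcomp Require Import mpoly.

Set Implicit Arguments.
Unset Strict Implicit.
Unset Printing Implicit Defensive.
Import GRing.Theory.
Local Open Scope ring_scope.

Definition CC : closedFieldType := R[i].

Definition qint (q : CC) (v : nat) : CC := (q ^+ v - q ^- v) / (q - q^-1).

Definition gamma_q (n : nat) (q : CC) (i : 'I_n) (p : {mpoly CC[n]}) : {mpoly CC[n]} :=
  comp_mpoly [tuple (if j == i then q *: 'X_j else 'X_j) | j < n] p.

Definition mdec (n : nat) (m : 'X_{1..n}) (i : 'I_n) : 'X_{1..n} :=
  [multinom (m j - (j == i))%N | j < n].

(* partial_{q,x_i}: the linear map x^a |-> [a_i]_q x^{a - e_i}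
   (when a_i = 0 the coefficient [0]_q is 0). *)
Definition dq (n : nat) (q : CC) (i : 'I_n) (p : {mpoly CC[n]}) : {mpoly CC[n]} :=
  \sum_(m <- msupp p) (p@_m * qint q (m i)) *: 'X_[mdec m i].

Definition twisted_derivation (A : pzRingType) (sigma sigma_inv : A -> A)
  (D : A -> A) : Prop :=
  forall a b, D (a * b) = D a * sigma b + sigma_inv a * D b.

(* Main.v *)
Require Import Defs.
From Stdlib Require Import Reals.
From mathcomp Require Import all_boot all_algebra.
From mathcomp Require Import Rstruct.
From mathcomp.real_closed Require Import complex.
From mathcomp Require Import mpoly.
From mathcomp Require Import ring.
Import GRing.Theory.
Local Open Scope ring_scope.

Section Aux.
Variables (n : nat) (q : CC) (i : 'I_n).

Lemma gammaX (j : 'I_n) : gamma_q q i 'X_j = if j == i then q *: 'X_j else 'X_j.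
Proof. by rewrite /gamma_q comp_mpolyXU -tnth_nth tnth_mktuple. Qed.

Lemma gammaXm (m : 'X_{1..n}) : gamma_q q i 'X_[m] = q ^+ (m i) *: 'X_[m].
Proof.
rewrite /gamma_q comp_mpolyX [in RHS]mpolyXE_id -mul_mpolyC.
under eq_bigr => j _ do rewrite tnth_mktuple.
rewrite (eq_bigr (fun j => (if j == i then (q ^+ (m j))%:MP else 1) * 'X_j ^+ m j)).
  by rewrite big_split /= -big_mkcond big_pred1_eq.
move=> j _; case: eqP => _; last by rewrite mul1r.
by rewrite -mul_mpolyC exprMn rmorphXn.
Qed.

Lemma X_neq0 (j : 'I_n) : ('X_j : {mpoly CC[n]}) != 0.
Proof.
apply/eqP=> h; have := mcoeffXU CC j j; rewrite h mcoeff0 eqxx => /eqP.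
by rewrite eq_sym oner_eq0.
Qed.

End Aux.

Theorem lemma1p2 (n : nat) (q : CC) (i : 'I_n)
  (hq0 : q != 0) (hq1 : q != 1) (hqm1 : q != -1)
  (D : {linear {mpoly CC[n]} -> {mpoly CC[n]}})
  (hD : twisted_derivation (gamma_q q i) (gamma_q q^-1 i) D) :
  exists f : {mpoly CC[n]}, forall a : {mpoly CC[n]}, D a = f * dq q i a.
Proof.
have hqq : q - q^-1 != 0.
  apply/eqP=> h; have : (q - 1) * (q + 1) = 0.
    have -> : (q - 1) * (q + 1) = q * (q - q^-1) + (q * q^-1 - 1) by ring.
    by rewrite h mulr0 mulfV // subrr addr0.
  move/eqP; rewrite mulf_eq0 subr_eq0 addr_eq0 (negbTE hq1) (negbTE hqm1) //.
have D1 : D 1 = 0.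
  have := hD 1 1; rewrite mulr1 /gamma_q !comp_mpoly1 mulr1 mul1r.
  by rewrite -{1}(addr0 (D 1)) => /addrI <-.
set f := D 'X_i.
have DXj : forall j, j != i -> D 'X_j = 0.
  move=> j hji; set g := D 'X_j.
  have h1 := hD 'X_i 'X_j; have h2 := hD 'X_j 'X_i.
  rewrite mulrC h2 !gammaX eqxx (negbTE hji) in h1.
  rewrite -/f -/g in h1.
  have E : g * (q%:MP * 'X_i) = (q^-1)%:MP * 'X_i * g.
    by rewrite !mul_mpolyC; apply: (@addIr _ ('X_j * f)); rewrite h1 addrC [f * _]mulrC.
  have : (q - q^-1)%:MP * (g * 'X_i) = 0.
    rewrite raddfB mulrBl.
    have -> : q%:MP * (g * 'X_i) = g * (q%:MP * 'X_i) by ring.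
    rewrite E; ring.
  move/eqP; rewrite mulf_eq0 mpolyC_eq0 (negbTE hqq) /= mulf_eq0 (negbTE (@X_neq0 _ i)) orbF.
  by move/eqP.
have main : forall m : 'X_{1..n}, D 'X_[m] = f * (qint q (m i) *: 'X_[mdec m i]).
  have Z : forall m : 'X_{1..n}, m = 0%MM -> D 'X_[m] = f * (qint q (m i) *: 'X_[mdec m i]).
    move=> m ->; rewrite mpolyX0 D1 mnm0E /qint expr0 invr1 subrr mul0r scale0r mulr0 //.
  move=> m; move: {2}(mdeg m) (leqnn (mdeg m)) => k; elim: k m => [|k IH] m hm.
    by apply: Z; apply/eqP; rewrite -mdeg_eq0 -leqn0.
  case: (pickP (fun j => (0 < m j)%N)) => [j hj | h]; last first.
    apply: Z; apply/mnmP => l; rewrite mnm0E.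
    by have := h l; rewrite lt0n => /negbFE/eqP.
  set m' := (m - U_(j))%MM.
  have em : m = (m' + U_(j))%MM.
    apply/mnmP => l; rewrite mnmDE mnmBE mnm1E.
    case: (eqVneq j l) => [<-|_] /=; last by rewrite addn0 subn0.
    by rewrite subnK.
  have hdeg : (mdeg m' <= k)%N.
    by move: hm; rewrite {1}em mdegD mdeg1 addn1 ltnS.
  have IHm := IH m' hdeg.
  case: (eqVneq j i) => [eji | nji].
  - subst j.
    have eX : 'X_[m] = 'X_i * 'X_[m'] :> {mpoly CC[n]} by rewrite {1}em mpolyXD mulrC.
    rewrite eX hD IHm gammaXm gammaX eqxx -/f.
    have mi : m i = (m' i).+1 by rewrite {1}em mnmDE mnm1E eqxx addn1.
    have md : mdec m i = m'.
      apply/mnmP => l; rewrite /mdec mnmE {1}em mnmDE mnm1E eq_sym.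
      by rewrite addnK.
    rewrite mi md.
    case k0: (m' i) => [|k'].
      rewrite /qint !expr0 !expr1 invr1 subrr mul0r scale0r !mulr0 addr0 divff //.
    have eY : 'X_i * 'X_[mdec m' i] = 'X_[m'] :> {mpoly CC[n]}.
      rewrite -mpolyXD; congr mpolyX; apply/mnmP => l.
      rewrite mnmDE mnm1E /mdec mnmE.
      case: (eqVneq i l) => [<-|nil]; first by rewrite k0 subn1 add1n.
      by rewrite add0n subn0.
    have -> : q^-1 *: 'X_i * (f * (qint q k'.+1 *: 'X_[mdec m' i]))
        = f * ((q^-1 * qint q k'.+1) *: ('X_i * 'X_[mdec m' i])).
      by rewrite -!mul_mpolyC mulrCA mulrACA -rmorphM.
    rewrite eY -mulrDr -scalerDl; congr (f * (_ *: _)).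
    rewrite /qint; set a := q ^+ k'.+1; rewrite exprS -/a.
    have a0 : a != 0 by rewrite expf_neq0.
    field; rewrite hq0 a0 andbT; have -> : q * q - 1 = (q - 1) * (q + 1) by ring.
    by rewrite mulf_neq0 // ?subr_eq0 ?addr_eq0.
  - have eX : 'X_[m] = 'X_[m'] * 'X_j :> {mpoly CC[n]} by rewrite {1}em mpolyXD.
    rewrite eX hD IHm gammaX (negbTE nji) DXj // mulr0 addr0.
    have mi : m i = m' i by rewrite {1}em mnmDE mnm1E (negbTE nji) addn0.
    have md : mdec m i = (mdec m' i + U_(j))%MM.
      apply/mnmP => l; rewrite mnmDE mnm1E /mdec !mnmE {1}em mnmDE mnm1E.
      case: (eqVneq j l) => [<-|njl].
        by rewrite (negbTE nji) !subn0 /m' mnmBE mnm1E eqxx.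
      by rewrite !addn0 subn0 /m' mnmBE mnm1E (negbTE njl) subn0.
    by rewrite mi md mpolyXD scalerAl mulrA.
exists f => a.
have -> : D a = D (\sum_(m <- msupp a) (a@_m *: 'X_[m])) by rewrite -mpolyE.
rewrite linear_sum /dq mulr_sumr; apply: eq_bigr => m _.
by rewrite linearZ /= main -scalerA scalerAr.
Qed.
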